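(* Let $A$ be a C$^*$-algebra with cancellation. (1) If $p_1,q,p_2$ are projections in $A$ with $p_1\leq p_2$ and $p_1\lesssim q\lesssim p_2$, then there exists a projection $q'\in A$ with $q'\sim_{\mathrm{MvN}}q$ and $p_1\leq q'\leq p_2$. (2) Let $\{p_n\}_{n=1}^N$ and $\{q_m\}_{m=1}^M$ be increasing sequences of projections in $A$. If there exist integers $1\leq m_1<\cdots<m_N=M$ with $p_n\sim_{\mathrm{MvN}}q_{m_n}$ for all $1\leq n\leq N$, then there exists an increasing sequence $\{r_m\}_{m=1}^M$ of projections in $A$ such that $r_m\sim_{\mathrm{MvN}}q_m$ for all $1\leq m\leq M$ and $r_{m_n}=p_n$ for all $1\leq n\leq N$.
   Context: For projections $p,q$ in a C$^*$-algebra $A$: $p\leq q$ means $pq=qp=p$; $p\sim_{\mathrm{MvN}}q$ denotes Murray--von Neumann equivalence; $p\lesssim q$ means that there is a projection $p'\in A$ with $p'\sim_{\mathrm{MvN}}p$ and $p'\leq q$. A sequence of projections is increasing if it is increasing for $\leq$. $A$ has cancellation if for all projections $p,q$ in $\bigcup_{n\geq1}M_n(A)$, $[p]_0=[q]_0$ in $K_0(A)$ if and only if $p\sim_{\mathrm{MvN}}q$. *)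

(* Defs.v *)
(* C*-algebras are encoded through their unitization. *)
From HB Require Import structures.
From mathcomp Require Import all_boot all_order all_algebra.
From mathcomp Require Import reals complex.
Set Implicit Arguments. Unset Strict Implicit. Unset Printing Implicit Defensive.
Import Order.TTheory GRing.Theory Num.Theory ComplexField.
Local Open Scope ring_scope.

Section CstarDefs.
Variable R : realType.
Local Notation C := R[i].
Variable B : algType C.          (* the unitization \tilde A of A *)
Variable star : B -> B.
Variable nrm : B -> R.
Variable A : B -> Prop.            (* the C*-algebra A, as an ideal of B *)

Definition nrm_converges (u : nat -> B) (l : B) : Prop :=
  forall e : R, 0 < e -> exists N : nat, forall n, (N <= n)%N -> nrm (u n - l) < e.

Definition nrm_cauchy (u : nat -> B) : Prop :=
  forall e : R, 0 < e -> exists N : nat,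
    forall m n, (N <= m)%N -> (N <= n)%N -> nrm (u m - u n) < e.

Definition is_unital_Cstar_algebra : Prop :=
      (forall x y, star (x + y) = star x + star y) /\
      (forall (a : C) x, star (a *: x) = conjc a *: star x) /\
      (forall x y, star (x * y) = star y * star x) /\
      (forall x, star (star x) = x) /\
      (forall x, nrm x = 0 <-> x = 0) /\
      (forall x y, nrm (x + y) <= nrm x + nrm y) /\
      (forall (a : C) x, nrm (a *: x) = ComplexField.Normc.normc a * nrm x) /\
      (forall x y, nrm (x * y) <= nrm x * nrm y) /\
      (forall x, nrm (star x * x) = nrm x ^+ 2) /\
      (forall u, nrm_cauchy u -> exists l, nrm_converges u l).

Definition is_unitization_of : Prop :=
  is_unital_Cstar_algebra /\
      A 0 /\
      (forall x y, A x -> A y -> A (x + y)) /\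
      (forall (a : C) x, A x -> A (a *: x)) /\
      (forall x y, A x -> A (x * y) /\ A (y * x)) /\
      (forall x, A x -> A (star x)) /\
      (forall u l, (forall n, A (u n)) -> nrm_converges u l -> A l) /\
      (forall x, exists2 a, A a & exists c : C, x = a + c%:A) /\ ~ A 1.

Definition is_proj (p : B) : Prop := A p /\ p * p = p /\ star p = p.

Definition proj_le (p q : B) : Prop := p * q = p /\ q * p = p.

Definition mvn (p q : B) : Prop :=
  exists2 v, A v & star v * v = p /\ v * star v = q.

Definition proj_lesssim (p q : B) : Prop :=
  exists p', [/\ is_proj p', mvn p' p & proj_le p' q].

Definition mx_star m n (x : 'M[B]_(m, n)) : 'M[B]_(n, m) := (map_mx star x)^T.

Definition mx_in (P : B -> Prop) m n (x : 'M[B]_(m, n)) : Prop :=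
  forall i j, P (x i j).

Definition mx_proj (P : B -> Prop) n (p : 'M[B]_n) : Prop :=
  [/\ mx_in P p, p *m p = p & mx_star p = p].

Definition mx_mvn (P : B -> Prop) n m (p : 'M[B]_n) (q : 'M[B]_m) : Prop :=
  exists v : 'M[B]_(m, n), [/\ mx_in P v, mx_star v *m v = p & v *m mx_star v = q].

Definition dsum n k (p : 'M[B]_n) (r : 'M[B]_k) : 'M[B]_(n + k) :=
  block_mx p 0 0 r.

Definition A_unital : Prop :=
  exists2 e, A e & forall x, A x -> e * x = x /\ x * e = x.

(* [p]_0 = [q]_0 in K_0(A) for p in P_n(A), q in P_m(A).
   Unital case: K_0(A) is the Grothendieck group of (D(A), (+)), so equality
   means p (+) r ~_0 q (+) r for some r in P_oo(A).
   General case: K_0(A) = ker(K_0(A~) -> K_0(C)) <= K_0(A~), so equality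
   means p (+) r ~_0 q (+) r for some r in P_oo(A~). *)
Definition K0_eq n m (p : 'M[B]_n) (q : 'M[B]_m) : Prop :=
  (A_unital ->
    exists k (r : 'M[B]_k), mx_proj A r /\ mx_mvn A (dsum p r) (dsum q r)) /\
  (~ A_unital ->
    exists k (r : 'M[B]_k), mx_proj (fun _ : B => True) r /\ mx_mvn (fun _ : B => True) (dsum p r) (dsum q r)).

Definition has_cancellation : Prop :=
  forall n m (p : 'M[B]_n) (q : 'M[B]_m), mx_proj A p -> mx_proj A q ->
    (K0_eq p q <-> mx_mvn A p q).

End CstarDefs.

(* Main.v *)
Require Import Defs.
From HB Require Import structures.
From mathcomp Require Import all_boot all_order all_algebra.
From mathcomp Require Import reals complex.
From mathcomp Require Import zify.
Set Implicit Arguments. Unset Strict Implicit. Unset Printing Implicit Defensive.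
Import Order.TTheory GRing.Theory Num.Theory ComplexField.
Local Open Scope ring_scope.

Section S.
Variable R : realType.
Variable B : algType R[i].
Variable star : B -> B.
Variable nrm : B -> R.
Variable A : B -> Prop.
Hypothesis hB : is_unitization_of star nrm A.
Hypothesis hcanc : has_cancellation star A.

Lemma starD x y : star (x + y) = star x + star y.
Proof. by case: hB => [[]]. Qed.
Lemma starM x y : star (x * y) = star y * star x.
Proof. by case: hB => [[_ [_ []]]]. Qed.
Lemma starK x : star (star x) = x.
Proof. by case: hB => [[_ [_ [_ []]]]]. Qed.
Lemma star0 : star 0 = 0.
Proof. have h := starD 0 0; rewrite addr0 in h. by apply/(addrI (star 0)); rewrite addr0 -h. Qed.
Lemma starN x : star (- x) = - star x.
Proof. by apply/(addIr (star x)); rewrite -starD !addNr star0. Qed.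
Lemma starB x y : star (x - y) = star x - star y.
Proof. by rewrite starD starN. Qed.
Lemma AD x y : A x -> A y -> A (x + y).
Proof. by case: hB => [_ [_ [h _]]]; apply: h. Qed.
Lemma AM x y : A x -> A (x * y) /\ A (y * x).
Proof. by case: hB => [_ [_ [_ [_ [h _]]]]]; apply: h. Qed.
Lemma AMl x y : A x -> A (x * y). Proof. by move/(AM y)=> []. Qed.
Lemma AMr x y : A y -> A (x * y). Proof. by move/(@AM y x)=> []. Qed.
Lemma A0 : A 0. Proof. by case: hB => [_ []]. Qed.
Lemma AN x : A x -> A (- x).
Proof. move=> h; rewrite -mulN1r; exact: AMr. Qed.
Lemma AB x y : A x -> A y -> A (x - y).
Proof. by move=> hx hy; apply: AD => //; apply: AN. Qed.
Lemma Astar x : A x -> A (star x).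
Proof. by case: hB => [_ [_ [_ [_ [_ [h _]]]]]]; apply: h. Qed.

Lemma cstar0 x : star x * x = 0 -> x = 0.
Proof.
case: hB => [[_ [_ [_ [_ [hn [_ [_ [_ [hc _]]]]]]]]]] _ h.
apply/hn; have := hc x; rewrite h.
have -> : nrm 0 = 0 by apply/hn.
by move/esym/eqP; rewrite sqrf_eq0 => /eqP.
Qed.

Lemma lft (x y z : B) : x * y = z -> forall t, t * x * y = t * z.
Proof. by move=> h t; rewrite -mulrA h. Qed.

Lemma pi_right v p : star v * v = p -> p * p = p -> v * p = v.
Proof.
move=> hp hpp; apply/eqP; rewrite eq_sym -subr_eq0; apply/eqP/cstar0.
have sp : star p = p by rewrite -hp starM starK.
rewrite starB starM sp mulrBl !mulrBr !mulrA hp.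
rewrite !(lft hp) !hpp.
by rewrite !subrr ?subr0.
Qed.

Lemma pi_left v : (star v * v) * (star v * v) = star v * v -> v * star v * v = v.
Proof. by move=> h; rewrite -mulrA (pi_right (erefl _) h). Qed.


Lemma c1M (a b : B) : (const_mx a : 'M[B]_1) *m (const_mx b : 'M[B]_1) = const_mx (a*b).
Proof. by apply/matrixP => i j; rewrite !mxE big_ord1 !mxE. Qed.
Lemma c1D (a b : B) : const_mx a + const_mx b = const_mx (a+b) :> 'M[B]_1.
Proof. by apply/matrixP => i j; rewrite !mxE. Qed.
Lemma c10 : const_mx 0 = 0 :> 'M[B]_1.
Proof. by apply/matrixP => i j; rewrite !mxE. Qed.
Lemma c1star (a : B) : mx_star star (const_mx a : 'M[B]_1) = const_mx (star a).
Proof. by apply/matrixP => i j; rewrite !mxE. Qed.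
Lemma mx_star_block m1 m2 n1 n2 (a : 'M[B]_(m1,n1)) (b : 'M[B]_(m1,n2)) (c : 'M[B]_(m2,n1)) (d : 'M[B]_(m2,n2)) :
  mx_star star (block_mx a b c d) = block_mx (mx_star star a) (mx_star star c) (mx_star star b) (mx_star star d).
Proof. by rewrite /mx_star map_block_mx tr_block_mx. Qed.
Lemma mx_in_block (P : B -> Prop) (a b c d : B) : P a -> P b -> P c -> P d ->
  mx_in P (block_mx (const_mx a) (const_mx b) (const_mx c) (const_mx d) : 'M[B]_(1+1)).
Proof.
move=> ha hb hc hd i j; rewrite /block_mx /col_mx /row_mx !mxE.
by case: (split i) => ?; rewrite !mxE; case: (split j) => ?; rewrite mxE.
Qed.
Lemma mx_in_c1 (P : B -> Prop) (a : B) : P a -> mx_in P (const_mx a : 'M[B]_1).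
Proof. by move=> h i j; rewrite mxE. Qed.
Lemma mx_proj_c1 (P : B -> Prop) (a : B) : P a -> a * a = a -> star a = a -> mx_proj star P (const_mx a : 'M[B]_1).
Proof. by move=> h1 h2 h3; split; [exact: mx_in_c1 | rewrite c1M h2 | rewrite c1star h3]. Qed.

Lemma block_c1_eq (a b c d a' b' c' d' : B) : a = a' -> b = b' -> c = c' -> d = d' ->
  block_mx (const_mx a : 'M[B]_1) (const_mx b : 'M[B]_1) (const_mx c : 'M[B]_1) (const_mx d : 'M[B]_1) =
  block_mx (const_mx a') (const_mx b') (const_mx c') (const_mx d').
Proof. by move=> -> -> -> ->. Qed.

Lemma proj_sub p q : is_proj star A p -> is_proj star A q -> proj_le q p -> is_proj star A (p - q).
Proof.
move=> [hpA [hp sp]] [hqA [hq sq]] [qp pq]; split; first exact: AB.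
split; last by rewrite starB sp sq.
by rewrite mulrBl !mulrBr hp qp pq hq subrr subr0.
Qed.

Lemma cancel_step p1 e p2 w :
 is_proj star A p1 -> is_proj star A e -> is_proj star A p2 -> proj_le e p2 -> proj_le p1 p2 ->
 A w -> star w * w = e -> w * star w = p1 ->
 exists2 z, A z & star z * z = p2 - e /\ z * star z = p2 - p1.
Proof.
move=> Hp1 He Hp2 Hep2 Hp1p2 hwA hwe hwp.
have [haA [ha sa]] := proj_sub Hp2 Hp1 Hp1p2.
have [hbA [hb sb]] := proj_sub Hp2 He Hep2.
move: Hp1 He Hp2 Hep2 Hp1p2 => [hp1A [hp1 sp1]] [heA [he se]] [hp2A [hp2 sp2]] [ep2 p2e] [p1p2 p2p1].
set a := p2 - p1 in haA ha sa *; set b := p2 - e in hbA hb sb *.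
have we : w * e = w by rewrite -hwe; apply: pi_right => //; rewrite hwe.
have ew : e * star w = star w by have := congr1 star we; rewrite starM se.
have bp2 : b * p2 = b by rewrite /b mulrBl hp2 ep2.
have p2b : p2 * b = b by rewrite /b mulrBr hp2 p2e.
have ap2 : a * p2 = a by rewrite /a mulrBl hp2 p1p2.
have p2a : p2 * a = a by rewrite /a mulrBr hp2 p2p1.
have wp2 : w * p2 = w by rewrite -we -mulrA ep2.
have p2w : p2 * star w = star w by rewrite -ew mulrA p2e.
have bw : b * star w = 0 by rewrite -ew /b mulrA mulrBl p2e he subrr mul0r.
have wb : w * b = 0 by rewrite -we /b -mulrA mulrBr ep2 he subrr mulr0.
have ab : a + p1 = p2 by rewrite /a subrK.
have be : b + e = p2 by rewrite /b subrK.
have ap1 : a * p1 = 0 by rewrite /a mulrBl p2p1 hp1 subrr.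
have p1a : p1 * a = 0 by rewrite /a mulrBr p1p2 hp1 subrr.
have hK : K0_eq star A (const_mx b : 'M_1) (const_mx a : 'M_1).
  suff hV : forall P : B -> Prop, (forall x, A x -> P x) ->
     mx_mvn star P (dsum (const_mx b : 'M_1) (const_mx p1 : 'M_1)) (dsum (const_mx a : 'M_1) (const_mx p1 : 'M_1)).
    split=> _; exists 1%N, (const_mx p1); split.
    - exact: mx_proj_c1.
    - exact: hV.
    - exact: mx_proj_c1.
    - exact: hV.
  move=> P hP.
  exists (block_mx (const_mx (a*b)) (const_mx (a * star w)) (const_mx (p1 * b)) (const_mx (p1 * star w))).
  split.
  - by apply: mx_in_block; apply: hP; apply: AMl.
  - rewrite /dsum mx_star_block !c1star mulmx_block !c1M !c1D -c10.
    apply: block_c1_eq; rewrite ?starM ?sa ?sb ?sp1 ?starK.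
    all: rewrite ?mulrA ?(lft ha) ?(lft hb) ?(lft hp1) ?(lft hwe).
    all: rewrite -?mulrDl -?mulrDr ?ab ?be ?bp2 ?wp2 ?ap2 ?hwp ?p1p2 ?ha ?hb ?hp1 ?ap1 ?p1a ?bw ?wb //.
  - rewrite /dsum mx_star_block !c1star mulmx_block !c1M !c1D -c10.
    apply: block_c1_eq; rewrite ?starM ?sa ?sb ?sp1 ?starK.
    all: rewrite ?mulrA ?(lft ha) ?(lft hb) ?(lft hp1) ?(lft hwe).
    all: rewrite -?mulrDl -?mulrDr ?ab ?be ?bp2 ?wp2 ?ap2 ?hwp ?p1p2 ?ha ?hb ?hp1 ?ap1 ?p1a ?bw ?wb //.
have hPb := mx_proj_c1 hbA hb sb.
have hPa := mx_proj_c1 haA ha sa.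
have [v [hvA h1 h2]] := (hcanc hPb hPa).1 hK.
exists (v ord0 ord0); first exact: hvA.
split.
- by have := congr1 (fun M : 'M[B]_1 => M ord0 ord0) h1; rewrite /= !mxE big_ord1 !mxE.
- by have := congr1 (fun M : 'M[B]_1 => M ord0 ord0) h2; rewrite /= !mxE big_ord1 !mxE.
Qed.

Lemma part1 p1 q p2 :
  is_proj star A p1 -> is_proj star A q -> is_proj star A p2 ->
  proj_le p1 p2 -> proj_lesssim star A p1 q -> proj_lesssim star A q p2 ->
  exists q' : B, [/\ is_proj star A q', mvn star A q' q, proj_le p1 q' & proj_le q' p2].
Proof.
move=> Hp1 Hq Hp2 Hp1p2 [p1' [Hp1' [v1 hv1A [hv1a hv1b]] [p1'q qp1']]] [q0 [Hq0 [v0 hv0A [hv0a hv0b]] [q0p2 p2q0]]].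
move: (Hp1) (Hq) (Hp2) (Hp1p2) (Hp1') (Hq0) => [hp1A [hp1 sp1]] [hqA [hq sq]] [hp2A [hp2 sp2]] [p1p2 p2p1] [hp1'A [hp1' sp1']] [hq0A [hq0 sq0]].
have v0q0 : v0 * q0 = v0 by apply: pi_right.
have qv0 : q * v0 = v0 by rewrite -hv0b -mulrA hv0a v0q0.
have q0v0s : q0 * star v0 = star v0 by have := congr1 star v0q0; rewrite starM sq0.
have v1p1' : v1 * p1' = v1 by apply: pi_right.
have v1q : v1 * q = v1 by rewrite -v1p1' -mulrA p1'q.
set e := star v0 * p1' * v0.
set w := v1 * v0.
have ee : e * e = e by rewrite /e !mulrA (lft hv0b) (lft p1'q) (lft hp1').
have se : star e = e by rewrite /e !starM starK sp1' mulrA.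
have eq0 : e * q0 = e by rewrite /e (lft v0q0).
have q0e : q0 * e = e by rewrite /e !mulrA q0v0s.
have ep2 : e * p2 = e by rewrite -[in LHS]eq0 -mulrA q0p2 eq0.
have p2e : p2 * e = e by rewrite -[in LHS]q0e mulrA p2q0 q0e.
have heA : A e by apply: AMl; apply: AMr.
have hwA : A w by apply: AMl.
have hwe : star w * w = e by rewrite /w starM !mulrA (lft hv1a).
have hwp : w * star w = p1 by rewrite /w starM !mulrA (lft hv0b) v1q.
have He : is_proj star A e by split.
clearbody e w.
have [z0 hz0A [hz0a hz0b]] := cancel_step Hp1 He Hp2 (conj ep2 p2e) Hp1p2 hwA hwe hwp.
have [hbA [hb sb]] := proj_sub Hp2 He (conj ep2 p2e).
have [haA [ha sa]] := proj_sub Hp2 Hp1 Hp1p2.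
have we : w * e = w by apply: pi_right.
have p1w : p1 * w = w by rewrite -hwp -mulrA hwe we.
have swp1 : star w * p1 = star w by have := congr1 star p1w; rewrite starM sp1.
have z0b : z0 * (p2 - e) = z0 by apply: pi_right.
have az0 : (p2 - p1) * z0 = z0 by rewrite -hz0b -mulrA hz0a z0b.
have sz0b : (p2 - e) * star z0 = star z0 by have := congr1 star z0b; rewrite starM sb.
have swz0 : star w * z0 = 0.
  by rewrite -az0 -swp1 !mulrA -(mulrA _ p1) mulrBr p1p2 hp1 subrr mulr0 mul0r.
have sz0w : star z0 * w = 0 by have := congr1 star swz0; rewrite starM starK star0.
have wsz0 : w * star z0 = 0.
  by rewrite -sz0b -we !mulrA -(mulrA _ e) mulrBr ep2 ee subrr mulr0 mul0r.
have z0sw : z0 * star w = 0 by have := congr1 star wsz0; rewrite starM starK star0.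
have z0e : z0 * e = 0 by rewrite -z0b -mulrA mulrBl p2e ee subrr mulr0.
set z := w + z0.
have zz : star z * z = p2 by rewrite /z starD mulrDl !mulrDr hwe swz0 sz0w hz0a addr0 add0r addrC subrK.
have zz' : z * star z = p2 by rewrite /z starD mulrDl !mulrDr hwp wsz0 z0sw hz0b addr0 add0r subrKC.
have zez : z * e * star z = p1.
  by rewrite /z starD mulrDl !mulrDr !mulrDl we z0e !mul0r hwp wsz0 !addr0.
have p2z : p2 * z = z * p2 by rewrite -{1}zz' -mulrA zz.
have szp2 : star z * p2 = p2 * star z by rewrite -{1}zz' mulrA zz.
have hzA : A z by apply: AD.
clearbody z.
exists (z * q0 * star z); split.
- split; first by apply: AMl; apply: AMr.
  split; last by rewrite !starM starK sq0 mulrA.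
  by rewrite !mulrA (lft zz) (lft q0p2) (lft hq0).
- exists (v0 * star z); first by apply: AMl.
  split; first by rewrite starM starK !mulrA (lft hv0a).
  have v0p2 : v0 * p2 = v0 by rewrite -v0q0 -mulrA q0p2.
  by rewrite starM starK !mulrA (lft zz) v0p2 hv0b.
- split.
  + by rewrite -zez !mulrA (lft zz) (lft ep2) (lft eq0).
  + by rewrite -zez !mulrA (lft zz) (lft q0p2) (lft q0e).
- split.
  + by rewrite (lft szp2) !mulrA (lft q0p2).
  + by rewrite !mulrA p2z (lft p2q0).
Qed.

Lemma proj_le_trans (a b c : B) : proj_le a b -> proj_le b c -> proj_le a c.
Proof.
move=> [ab ba] [bc cb]; split; first by rewrite -ab -mulrA bc.
by rewrite -ba mulrA cb.
Qed.

Lemma proj_le_refl p : is_proj star A p -> proj_le p p.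
Proof. by move=> [_ [h _]]. Qed.

Lemma chain (f : nat -> B) lo hi :
  (forall i, (lo <= i <= hi)%N -> is_proj star A (f i)) ->
  (forall i, (lo <= i < hi)%N -> proj_le (f i) (f i.+1)) ->
  forall i j, (lo <= i)%N -> (i <= j)%N -> (j <= hi)%N -> proj_le (f i) (f j).
Proof.
move=> hp hl i j hlo hij hj; elim: j hij hj => [|j IH] hij hj.
  have -> : i = 0%N by lia.
  by apply: proj_le_refl; apply: hp; lia.
have [->|hne] := eqVneq i j.+1; first by apply: proj_le_refl; apply: hp; lia.
apply: proj_le_trans (IH _ _) (hl _ _); lia.
Qed.

Lemma mvn_sym (p q : B) : mvn star A p q -> mvn star A q p.
Proof. by move=> [v hv [h1 h2]]; exists (star v); [apply: Astar | rewrite starK]. Qed.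

Lemma proj0 : is_proj star A 0.
Proof. by split; [exact: A0 | rewrite mul0r star0]. Qed.

Lemma le0 (x : B) : proj_le 0 x.
Proof. by split; rewrite ?mul0r ?mulr0. Qed.

Lemma lesssim0 (x : B) : proj_lesssim star A 0 x.
Proof. exists 0; split; [exact: proj0 | exists 0; rewrite ?star0 ?mul0r //; exact: A0 | exact: le0]. Qed.

Lemma lesssim_sub (q Q P : B) : is_proj star A q -> proj_le q Q -> mvn star A P Q -> is_proj star A P ->
  proj_lesssim star A q P.
Proof.
move=> [hqA [hq sq]] [qQ Qq] [v hvA [hva hvb]] [hPA [hP sP]].
have vP : v * P = v by apply: pi_right.
have Qv : Q * v = v by rewrite -hvb -mulrA hva vP.
exists (star v * q * v); split.
- split; first by apply: AMl; apply: AMr.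
  split; last by rewrite !starM starK sq mulrA.
  by rewrite !mulrA (lft hvb) (lft qQ) (lft hq).
- exists (q * v); first by apply: AMl.
  split; first by rewrite starM sq !mulrA (lft hq).
  by rewrite starM sq !mulrA (lft hvb) qQ hq.
- split.
  + by rewrite -mulrA vP.
  + by rewrite -hva !mulrA -(mulrA _ v) hvb -(mulrA _ Q) Qq.
Qed.

Lemma part2 (N M : nat) (p q : nat -> B) (ms : nat -> nat) :
      (1 <= N)%N ->
      (forall n, (1 <= n <= N)%N -> is_proj star A (p n)) ->
      (forall n, (1 <= n < N)%N -> proj_le (p n) (p n.+1)) ->
      (forall m, (1 <= m <= M)%N -> is_proj star A (q m)) ->
      (forall m, (1 <= m < M)%N -> proj_le (q m) (q m.+1)) ->
      (1 <= ms 1%N)%N ->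
      (forall n, (1 <= n < N)%N -> (ms n < ms n.+1)%N) ->
      ms N = M ->
      (forall n, (1 <= n <= N)%N -> mvn star A (p n) (q (ms n))) ->
      exists r : nat -> B,
        [/\ (forall m, (1 <= m <= M)%N -> is_proj star A (r m)),
            (forall m, (1 <= m < M)%N -> proj_le (r m) (r m.+1)),
            (forall m, (1 <= m <= M)%N -> mvn star A (r m) (q m)) &
            (forall n, (1 <= n <= N)%N -> r (ms n) = p n)].
Proof.
move=> hN hp hpl hq hql hms1 hmsl hmsN hpq.
have msmono : forall n n', (1 <= n)%N -> (n < n')%N -> (n' <= N)%N -> (ms n < ms n')%N.
  move=> n n' h1 h2 h3; elim: n' h2 h3 => [|n' IH] h2 h3; first by lia.
  have [->|hne] := eqVneq n n'; first by apply: hmsl; lia.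
  have := IH ltac:(lia) ltac:(lia); have := hmsl n' ltac:(lia); lia.
have msge : forall n, (1 <= n <= N)%N -> (1 <= ms n <= M)%N.
  move=> n /andP [h1 h2]; rewrite -hmsN.
  have [->|hne] := eqVneq n 1%N.
    by apply/andP; split => //; have [->|hne'] := eqVneq N 1%N; [|have := msmono 1%N N isT ltac:(lia) (leqnn _)]; lia.
  have := msmono 1%N n isT ltac:(lia) h2.
  have [->|hne'] := eqVneq n N; first by lia.
  have := msmono n N ltac:(lia) ltac:(lia) (leqnn _); lia.
suff: forall k, (k <= M)%N -> exists r : nat -> B, [/\ r 0%N = 0,
  (forall m, (1 <= m <= k)%N -> is_proj star A (r m) /\ mvn star A (r m) (q m)),
  (forall m, (1 <= m < k)%N -> proj_le (r m) (r m.+1)),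
  (forall m n, (m <= k)%N -> (1 <= n <= N)%N -> (m <= ms n)%N -> proj_le (r m) (p n)) &
  (forall n, (1 <= n <= N)%N -> (ms n <= k)%N -> r (ms n) = p n)].
  move=> /(_ M (leqnn _)) [r [_ h1 h2 _ h4]]; exists r; split => //.
  - by move=> m /h1 [].
  - by move=> m /h1 [].
  - move=> n hn; apply: h4 => //; have := msge n hn; lia.
elim=> [|k IH] hk.
  exists (fun _ => 0); split => //; first by move=> m; lia.
  - by move=> m; lia.
  - by move=> m n _ _ _; exact: le0.
  - by move=> n hn; have := msge n hn; lia.
have [r [r0 h1 h2 h3 h4]] := IH ltac:(lia).
have exn : exists n, (1 <= n)%N && (k < ms n)%N && (n <= N)%N.
  by exists N; rewrite hmsN hk leqnn hN.
pose n0 := ex_minn exn.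
have [hn0 hmin] : ((1 <= n0)%N && (k < ms n0)%N && (n0 <= N)%N) /\
   (forall n, (1 <= n)%N && (k < ms n)%N && (n <= N)%N -> (n0 <= n)%N).
  by rewrite /n0; case: ex_minnP.
move: hn0 => /andP [/andP [hn01 hkn0] hn0N].
have hprk : is_proj star A (r k).
  by have [->|hk0] := eqVneq k 0%N; [rewrite r0; exact: proj0 | have [] := h1 k ltac:(lia)].
have hrkp : proj_le (r k) (p n0) by apply: h3 => //; lia.
have pchain := chain hp hpl.
have [x [hx1 hx2 hx3 hx4 hx5]] : exists x, [/\ is_proj star A x, mvn star A x (q k.+1),
    proj_le (r k) x, proj_le x (p n0) & (ms n0 = k.+1 -> x = p n0)].
  have [heq|hne] := eqVneq (ms n0) k.+1.
    exists (p n0); split => //.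
    - by apply: hp; lia.
    - by rewrite -heq; apply: hpq; lia.
    - by apply: proj_le_refl; apply: hp; lia.
  have Hpn0 : is_proj star A (p n0) by apply: hp; lia.
  have Hqk : is_proj star A (q k.+1) by apply: hq; lia.
  have l1 : proj_lesssim star A (r k) (q k.+1).
    have [->|hk0] := eqVneq k 0%N; first by rewrite r0; exact: lesssim0.
    exists (q k); split.
    - by apply: hq; lia.
    - by apply: mvn_sym; have [] := h1 k ltac:(lia).
    - by apply: hql; lia.
  have l2 : proj_lesssim star A (q k.+1) (p n0).
    apply: (lesssim_sub Hqk _ (hpq n0 _) Hpn0); last by lia.
    apply: (chain hq hql); try lia; have := msge n0 ltac:(lia); lia.
  have [y [? ? ? ?]] := part1 hprk Hqk Hpn0 hrkp l1 l2.
  by exists y; split => // E; move: hne; rewrite E eqxx.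
exists (fun m => if m == k.+1 then x else r m); split.
- by [].
- move=> m hm; case: eqP => [->|hmk]; first by split.
  by apply: h1; lia.
- move=> m hm; case: eqP => [E|hmk]; first by lia.
  case: eqP => [E|hmk1]; first by have -> : m = k by lia.
  by apply: h2; lia.
- move=> m n hm hn hmn; case: eqP => [E|hmk]; last by apply: h3 => //; lia.
  have hle : (n0 <= n)%N by apply: hmin; apply/andP; split; [apply/andP; split|]; lia.
  by apply: proj_le_trans hx4 (pchain _ _ _ _ _); lia.
- move=> n hn hmsn; case: eqP => [E|hmk]; last by apply: h4 => //; lia.
  have hle : (n0 <= n)%N by apply: hmin; apply/andP; split; [apply/andP; split|]; lia.
  have [E'|hne] := eqVneq n0 n; first by rewrite -E' in E *; exact: hx5 E.
  have := msmono n0 n ltac:(lia) ltac:(lia) ltac:(lia); lia.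
Qed.
End S.

Theorem lemma2p2 (R : realType) (B : algType R[i]) (star : B -> B)
    (nrm : B -> R) (A : B -> Prop)
    (hB : is_unitization_of star nrm A) (hcanc : has_cancellation star A) :
  (* (1) *)
  (forall p1 q p2 : B,
      is_proj star A p1 -> is_proj star A q -> is_proj star A p2 ->
      proj_le p1 p2 -> proj_lesssim star A p1 q -> proj_lesssim star A q p2 ->
      exists q' : B,
        [/\ is_proj star A q', mvn star A q' q, proj_le p1 q' & proj_le q' p2])
  /\
  (* (2) *)
  (forall (N M : nat) (p q : nat -> B) (ms : nat -> nat),
      (1 <= N)%N ->
      (forall n, (1 <= n <= N)%N -> is_proj star A (p n)) ->
      (forall n, (1 <= n < N)%N -> proj_le (p n) (p n.+1)) ->
      (forall m, (1 <= m <= M)%N -> is_proj star A (q m)) ->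
      (forall m, (1 <= m < M)%N -> proj_le (q m) (q m.+1)) ->
      (1 <= ms 1%N)%N ->
      (forall n, (1 <= n < N)%N -> (ms n < ms n.+1)%N) ->
      ms N = M ->
      (forall n, (1 <= n <= N)%N -> mvn star A (p n) (q (ms n))) ->
      exists r : nat -> B,
        [/\ (forall m, (1 <= m <= M)%N -> is_proj star A (r m)),
            (forall m, (1 <= m < M)%N -> proj_le (r m) (r m.+1)),
            (forall m, (1 <= m <= M)%N -> mvn star A (r m) (q m)) &
            (forall n, (1 <= n <= N)%N -> r (ms n) = p n)]).
Proof.
split.
- exact: (part1 hB hcanc).
- exact: (part2 hB hcanc).
Qed.
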